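(* Let $N$ be a finite set with $|N|\ge2$ and let $o\in\mathbb{R}^{\Upsilon}$ be an SE objective. Then there exists a unique $\tau_o\in\mathbb{R}^{\mathcal{S}}$ such that $\langle o,\eta\rangle_{\Upsilon}=\langle\tau_o,c_\eta\rangle_{\mathcal{S}}$ for all $\eta\in\mathbb{R}^{\Upsilon}$. Specifically, $$\tau_o(T)=\sum_{\emptyset\neq K\subseteq R}(-1)^{|R\setminus K|}\,o(b|K)\quad\text{for } T\in\mathcal{S},\ b\in T,\ R=T\setminus\{b\},$$ and this expression does not depend on the choice of $b\in T$.
   Context: $\mathrm{DAG}(N)$ is the set of acyclic directed graphs over $N$; $\mathrm{pa}_G(a)$ is the parent set of $a$ in $G$; $G\sim H$ (Markov equivalence) means same adjacencies and same immoralities. $\Upsilon=\{(a|B): a\in N,\ \emptyset\neq B\subseteq N\setminus\{a\}\}$; $\eta_G\in\mathbb{R}^{\Upsilon}$ has $\eta_G(a|B)=1$ if $B=\mathrm{pa}_G(a)$, else $0$. $o$ is an SE objective if $\langle o,\eta_G\rangle=\langle o,\eta_H\rangle$ whenever $G\sim H$. $\mathcal{S}=\{S\subseteq N:|S|\ge 2\}$, and for $\eta\in\mathbb{R}^{\Upsilon}$, $c_\eta\in\mathbb{R}^{\mathcal{S}}$ is $c_\eta(S)=\sum_{a\in S}\sum_{B:\,S\setminus\{a\}\subseteq B\subseteq N\setminus\{a\}}\eta(a|B)$. Convention: $o(b|\emptyset)=0$ for $b\in N$. *)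

(* Defs.v *)
From HB Require Import structures.
From mathcomp Require Import all_boot all_order all_algebra.
From mathcomp Require Import reals.
Set Implicit Arguments. Unset Strict Implicit. Unset Printing Implicit Defensive.
Import Order.TTheory GRing.Theory Num.Theory.
Local Open Scope ring_scope.

Section Defs.
Variables (N : finType) (R : realType).

(* A directed graph over N is given by its parent function: a -> b iff a \in pa b. *)
Definition edge (pa : N -> {set N}) : rel N := fun a b => a \in pa b.

Definition is_dag (pa : N -> {set N}) : bool :=
  [forall x, ~~ [exists y, (y \in pa x) && connect (edge pa) x y]].

Definition adjacent (pa : N -> {set N}) (a b : N) : bool :=
  (a \in pa b) || (b \in pa a).

Definition immorality (pa : N -> {set N}) (a b c : N) : bool :=
  [&& a \in pa c, b \in pa c, a != b & ~~ adjacent pa a b].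

Definition markov_equiv (G H : N -> {set N}) : Prop :=
  (forall a b, adjacent G a b = adjacent H a b) /\
  (forall a b c, immorality G a b c = immorality H a b c).

(* Upsilon = {(a|B) : B nonempty, a \notin B}; vectors in R^Upsilon are
   functions N -> {set N} -> R, only their values on Upsilon matter. *)
Definition in_Upsilon (a : N) (B : {set N}) : bool := (B != set0) && (a \notin B).

Definition innerU (o eta : N -> {set N} -> R) : R :=
  \sum_(a : N) \sum_(B : {set N} | in_Upsilon a B) o a B * eta a B.

Definition eta_G (pa : N -> {set N}) : N -> {set N} -> R :=
  fun a B => if B == pa a then 1 else 0.

Definition SE_objective (o : N -> {set N} -> R) : Prop :=
  forall G H, is_dag G -> is_dag H -> markov_equiv G H ->
    innerU o (eta_G G) = innerU o (eta_G H).

(* S = {S subset N : |S| >= 2}; vectors in R^S are functions {set N} -> R. *)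
Definition in_S (S : {set N}) : bool := (2 <= #|S|)%N.

Definition c_eta (eta : N -> {set N} -> R) (S : {set N}) : R :=
  \sum_(a in S) \sum_(B : {set N} | in_Upsilon a B && (S :\ a \subset B)) eta a B.

Definition innerS (tau c : {set N} -> R) : R :=
  \sum_(S : {set N} | in_S S) tau S * c S.

End Defs.

(* Main.v *)
Require Import Defs.
From HB Require Import structures.
From mathcomp Require Import all_boot all_order all_algebra.
From mathcomp Require Import reals.
Import Order.TTheory GRing.Theory Num.Theory.
Local Open Scope ring_scope.
From mathcomp Require Import ring lra.
Import Order.TTheory GRing.Theory Num.Theory.
Local Open Scope ring_scope.
Set Implicit Arguments. Unset Strict Implicit. Unset Printing Implicit Defensive.

Section Aux.
Variables (N : finType) (R : realType).

Lemma split_sum (x : N) (X : {set N}) (F : {set N} -> R) : x \notin X ->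
  \sum_(K : {set N} | K \subset x |: X) F K = \sum_(C : {set N} | C \subset X) (F C + F (x |: C)).
Proof.
move=> xX; rewrite big_split /= (bigID (fun K : {set N} => x \in K)) /= addrC.
congr (_ + _).
- apply: eq_bigl => K; apply/idP/idP.
  + case/andP => /subsetP KX xK; apply/subsetP => y yK.
    have := KX _ yK; rewrite in_setU1; case/orP => // /eqP yx.
    by rewrite -yx yK in xK.
  + move=> KX; apply/andP; split.
    * by apply: subset_trans KX _; apply/subsetP => y; rewrite in_setU1 orbC => ->.
    * by apply: contra xX => xK; apply: (subsetP KX).
- rewrite (reindex_onto (fun C => x |: C) (fun K => K :\ x)) /=; last first.
    by move=> K /andP[_ xK]; rewrite setD1K.
  apply: eq_bigl => C; rewrite setU11 andbT; apply/idP/idP.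
  + case/andP => /subsetP CX /eqP CE; apply/subsetP => y yC.
    have yx : y != x by apply: contraTneq yC => ->; rewrite -CE setD11.
    by have := CX y; rewrite !in_setU1 yC orbT (negbTE yx) /=; apply.
  + move=> CX; have xC : x \notin C by apply: contra xX; apply: (subsetP CX).
    rewrite setU1K // eqxx andbT; apply/subsetP => y; rewrite !in_setU1.
    by case/orP => [->//|/(subsetP CX) ->]; rewrite orbT.
Qed.

Lemma setU1D (x : N) (C J : {set N}) : x \notin J ->
  (x |: C) :\: J = x |: (C :\: J).
Proof.
move=> xJ; apply/setP => y; rewrite !inE.
by case: (eqVneq y x) => [->|]; rewrite ?xJ.
Qed.

Lemma alt_sum (J B : {set N}) : J \subset B ->
  \sum_(K : {set N} | (J \subset K) && (K \subset B)) (-1) ^+ #|K :\: J| = (J == B)%:R :> R.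
Proof.
move=> JB; case: (eqVneq J B) => [->|JneB].
  rewrite (big_pred1 B) ?setDv ?cards0 ?expr0 //.
  by move=> K; rewrite /= eqEsubset andbC.
have /properP [_ [x xB xJ]] : J \proper B by rewrite properEneq JneB JB.
rewrite big_mkcondl /= -(setD1K xB) split_sum ?setD11 //.
apply: big1 => C CB.
have xC : x \notin C by apply: (contra (subsetP CB x)); rewrite setD11.
have -> : (J \subset x |: C) = (J \subset C).
  apply/idP/idP => /subsetP H; apply/subsetP => y yJ; last by rewrite in_setU1 H ?orbT.
  have := H y yJ; rewrite in_setU1; case/orP => // /eqP yx.
  by rewrite -yx yJ in xJ.
case: (J \subset C) => //; last by rewrite addr0.
rewrite setU1D // cardsU1 inE (negbTE xC) andbF /= add1n exprS mulN1r.
by rewrite subrr.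
Qed.


Definition M (o : N -> {set N} -> R) (b : N) (T : {set N}) : R :=
  \sum_(K : {set N} | (K != set0) && (K \subset T :\ b))
     (-1) ^+ #|(T :\ b) :\: K| * o b K.

Definition Phi (tau : {set N} -> R) (a : N) (B : {set N}) : R :=
  \sum_(S : {set N} | in_S S && (a \in S) && (S :\ a \subset B)) tau S.

Lemma mobius (o : N -> {set N} -> R) (a : N) (B : {set N}) : a \notin B -> B != set0 ->
  Phi (M o a) a B = o a B.
Proof.
move=> aB B0; rewrite /Phi.
rewrite (reindex_onto (fun K => a |: K) (fun S => S :\ a)) /=; last first.
  by move=> S /andP[/andP[_ aS] _]; rewrite setD1K.
transitivity (\sum_(K : {set N} | (K != set0) && (K \subset B)) M o a (a |: K)).
  apply: eq_bigl => K; rewrite setU11 andbT.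
  case: (boolP (a \in K)) => aK.
    have -> : ((a |: K) :\ a == K) = false.
      by apply/negbTE; apply: contraTneq aK => <-; rewrite setD11.
    rewrite andbF; apply/esym/negbTE; apply: contraNN aB => /andP[_ /subsetP].
    by apply.
  rewrite setU1K // eqxx andbT /in_S cardsU1 aK add1n ltnS card_gt0.
  by rewrite (andbC (K != set0)); case: (K \subset B).
rewrite (eq_bigr (fun K : {set N} => \sum_(J : {set N} | (J != set0) && (J \subset K))
     (-1) ^+ #|K :\: J| * o a J)); last first.
  move=> K /andP[_ KB]; rewrite /M setU1K //.
  by apply: contra aB; apply: (subsetP KB).
rewrite (exchange_big_dep (fun J : {set N} => (J != set0) && (J \subset B))) /=;
  last first.
  by move=> K J /andP[_ KB] /andP[-> JK]; apply: subset_trans KB.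
transitivity (\sum_(J : {set N} | (J != set0) && (J \subset B)) o a J * (J == B)%:R).
  apply: eq_bigr => J /andP[J0 JB]; rewrite -alt_sum // big_distrr /=.
  apply: eq_big => [K|K _]; last by rewrite mulrC.
  rewrite J0 /=; case JK: (J \subset K); rewrite ?andbF //= andbT.
  case: (K \subset B); rewrite ?andbF ?andbT //.
  by apply: contraNneq J0 => K0; rewrite -subset0 -K0.
rewrite (bigD1 B) /=; last by rewrite B0 subxx.
rewrite eqxx mulr1 big1 ?addr0 // => J /andP[_ JB].
by rewrite (negbTE JB) mulr0.
Qed.

Lemma innerS_phi (tau : {set N} -> R) (eta : N -> {set N} -> R) :
  innerS tau (c_eta eta) =
  \sum_(a : N) \sum_(B : {set N} | in_Upsilon a B) Phi tau a B * eta a B.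
Proof.
symmetry.
transitivity (\sum_(a : N) \sum_(S : {set N} | in_S S && (a \in S))
   \sum_(B : {set N} | in_Upsilon a B && (S :\ a \subset B)) tau S * eta a B).
  apply: eq_bigr => a _.
  under eq_bigr => B _ do rewrite /Phi big_distrl /=.
  rewrite (exchange_big_dep (fun S : {set N} => in_S S && (a \in S))) /=; last first.
    by move=> B S _ /andP[/andP[-> ->]].
  apply: eq_bigr => S /andP[S2 aS]; apply: eq_bigl => B.
  by rewrite S2 aS.
rewrite (exchange_big_dep (fun S : {set N} => in_S S)) /=; last first.
  by move=> a S _ /andP[].
rewrite /innerS; apply: eq_bigr => S S2.
rewrite /c_eta big_distrr /=; apply: eq_big => [a|a _]; first by rewrite S2.
by rewrite big_distrr.
Qed.

Definition ind (a0 : N) (B0 : {set N}) : N -> {set N} -> R :=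
  fun a B => if (a == a0) && (B == B0) then 1 else 0.

Lemma sum_ind (f : N -> {set N} -> R) (a0 : N) (B0 : {set N}) : in_Upsilon a0 B0 ->
  \sum_(a : N) \sum_(B : {set N} | in_Upsilon a B) f a B * ind a0 B0 a B = f a0 B0.
Proof.
move=> U; rewrite (bigD1 a0) //= [X in _ + X]big1 ?addr0; last first.
  by move=> a aa; apply: big1 => B _; rewrite /ind (negbTE aa) mulr0.
rewrite (bigD1 B0) //= [X in _ + X]big1 ?addr0 /ind ?eqxx ?mulr1 //.
by move=> B /andP[_ BB]; rewrite (negbTE BB) andbF mulr0.
Qed.

Lemma phi_zero (d : {set N} -> R) :
  (forall a B, in_Upsilon a B -> Phi d a B = 0) -> forall T, in_S T -> d T = 0.
Proof.
move=> H T; move: {2}#|T|.+1 (ltnSn #|T|) => n; elim: n T => // n IH T ltT TS.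
have [a aT] : exists a, a \in T.
  by apply/set0Pn; rewrite -card_gt0; move: TS; rewrite /in_S; case: #|T|.
have UB : in_Upsilon a (T :\ a).
  rewrite /in_Upsilon setD11 andbT -card_gt0.
  by move: TS; rewrite /in_S (cardsD1 a T) aT.
have := H a (T :\ a) UB; rewrite /Phi (bigD1 T) /=; last by rewrite TS aT subxx.
rewrite big1 ?addr0 // => S /andP[/andP[/andP[S2 aS] sub] neq].
have ST : S \subset T.
  apply/subsetP => x xS; case: (eqVneq x a) => [->//|xa].
  have : x \in S :\ a by rewrite in_setD1 xa.
  by move/(subsetP sub); rewrite in_setD1 => /andP[].
apply: IH => //.
have : (#|S| < #|T|)%N by apply: proper_card; rewrite properEneq neq ST.
by move=> h; apply: leq_trans h _.
Qed.


Lemma dag_rank (pa : N -> {set N}) (r : N -> nat) :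
  (forall u v, u \in pa v -> r u < r v)%N -> is_dag pa.
Proof.
move=> Hr; apply/forallP => x; apply/negP => /existsP [y /andP [yx /connectP [p pth ey]]].
have key : forall z (p : seq N), path (edge pa) z p -> (r z <= r (last z p))%N.
  move=> z0 p0; elim: p0 z0 => //= w p0 IH z0 /andP [e pt].
  by apply: leq_trans (ltnW (Hr _ _ e)) (IH _ pt).
have := key _ _ pth; rewrite -ey => h.
by have := Hr _ _ yx; rewrite ltnNge h.
Qed.

Definition Gr (C : {set N}) (p q : N) : N -> {set N} :=
  fun x => if x == p then q |: C else if x == q then C else set0.

Lemma mem_Gr (C : {set N}) (p q u v : N) : p != q ->
  (u \in Gr C p q v) = ((v == p) && ((u == q) || (u \in C))) || ((v == q) && (u \in C)).
Proof.
move=> pq; rewrite /Gr; case: (eqVneq v p) => [->|vp].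
  by rewrite (negbTE pq) /= orbF in_setU1.
case: (eqVneq v q) => [_|vq] //=; by rewrite in_set0.
Qed.

Lemma dag_Gr (C : {set N}) (p q : N) : p != q -> p \notin C -> q \notin C ->
  is_dag (Gr C p q).
Proof.
move=> pq pC qC.
apply: (@dag_rank _ (fun x => if x == p then 2 else if x == q then 1 else 0)%N).
move=> u v; rewrite mem_Gr //.
case/orP => /andP [/eqP -> H]; rewrite ?eqxx //.
  case: (eqVneq u p) => [up|up]; first by move: H; rewrite up (negbTE pq) (negbTE pC).
  by case: (u == q).
have qp : (q == p) = false by rewrite eq_sym (negbTE pq).
rewrite qp.
have up : u != p by apply: contraNneq pC => <-.
have uq : u != q by apply: contraNneq qC => <-.
by rewrite (negbTE up) (negbTE uq).
Qed.

Lemma equiv_Gr (C : {set N}) (p q : N) : p != q -> p \notin C -> q \notin C ->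
  markov_equiv (Gr C p q) (Gr C q p).
Proof.
move=> pq pC qC; have qp : q != p by rewrite eq_sym.
have adj : forall u v, adjacent (Gr C p q) u v = adjacent (Gr C q p) u v.
  move=> u v; rewrite /adjacent !mem_Gr //.
  by case: (u == p); case: (u == q); case: (v == p); case: (v == q);
     case: (u \in C); case: (v \in C).
split => // a b c; rewrite /immorality adj !mem_Gr //.
case: (eqVneq c p) => [ec|cp]; last case: (eqVneq c q) => [ec|cq]; try subst c;
  rewrite ?eqxx ?(negbTE pq) ?(negbTE qp) /= ?andbF ?orbF //.
all: rewrite /adjacent !mem_Gr //.
all: try (case: (eqVneq a q) => [ea|aq]; [subst a|]).
all: try (case: (eqVneq b q) => [eb|bq]; [subst b|]).
all: try (case: (eqVneq a p) => [ea|ap]; [subst a|]).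
all: try (case: (eqVneq b p) => [eb|bp]; [subst b|]).
all: rewrite ?eqxx ?(negbTE pq) ?(negbTE qp) ?(negbTE qC) ?(negbTE pC) /= ?andbF //.
all: rewrite ?(negbTE aq) ?(negbTE bq) ?(negbTE ap) ?(negbTE bp) /= ?andbF ?orbF //.
all: try first [by case: (b \in C); rewrite ?orbT | by case: (a \in C); rewrite ?orbT].
Qed.


Definition g (o : N -> {set N} -> R) (x : N) (K : {set N}) : R :=
  if K == set0 then 0 else o x K.

Lemma innerU_eta (o : N -> {set N} -> R) (pa : N -> {set N}) :
  innerU o (@eta_G _ R pa) = \sum_(a : N) (if in_Upsilon a (pa a) then o a (pa a) else 0).
Proof.
apply: eq_bigr => a _; rewrite big_mkcond (bigD1 (pa a)) //= /eta_G eqxx mulr1.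
rewrite big1 ?addr0 // => B BP; rewrite (negbTE BP) mulr0.
by case: (in_Upsilon a B).
Qed.

Lemma innerU_Gr (o : N -> {set N} -> R) (C : {set N}) (p q : N) :
  p != q -> p \notin C -> q \notin C ->
  innerU o (@eta_G _ R (Gr C p q)) = o p (q |: C) + g o q C.
Proof.
move=> pq pC qC; have qp : q != p by rewrite eq_sym.
rewrite innerU_eta (bigD1 p) //= (bigD1 q) //= big1 ?addr0; last first.
  move=> x /andP[xp xq]; rewrite /Gr (negbTE xp) (negbTE xq).
  by rewrite /in_Upsilon eqxx.
rewrite /Gr eqxx (negbTE qp) eqxx.
have -> : in_Upsilon p (q |: C).
  rewrite /in_Upsilon; apply/andP; split.
    by apply/set0Pn; exists q; rewrite setU11.
  by rewrite in_setU1 negb_or pq.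
congr (_ + _); rewrite /in_Upsilon /g qC andbT.
by case: (C == set0).
Qed.

Lemma SE_step (o : N -> {set N} -> R) (C : {set N}) (p q : N) :
  SE_objective o -> p != q -> p \notin C -> q \notin C ->
  o p (q |: C) - g o p C = o q (p |: C) - g o q C.
Proof.
move=> SE pq pC qC; have qp : q != p by rewrite eq_sym.
have := SE _ _ (dag_Gr pq pC qC) (dag_Gr qp qC pC) (equiv_Gr pq pC qC).
rewrite !innerU_Gr // => h.
lra.
Qed.


Lemma M_split (o : N -> {set N} -> R) (b b' : N) (T : {set N}) :
  b != b' -> b' \in T ->
  M o b T = \sum_(C : {set N} | C \subset T :\ b :\ b')
     (-1) ^+ #|T :\ b :\ b' :\: C| * (o b (b' |: C) - g o b C).
Proof.
move=> bb' b'T; rewrite /M big_mkcondl /=.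
set Rr := T :\ b :\ b'.
have E : T :\ b = b' |: Rr by rewrite setD1K // in_setD1 eq_sym bb' b'T.
rewrite E split_sum ?setD11 //; apply: eq_bigr => C CR.
have b'C : b' \notin C by apply: (contra (subsetP CR b')); rewrite setD11.
have b'R : b' \notin Rr :\: C by apply: (contra (subsetP (subsetDl Rr C) b')); rewrite /Rr setD11.
have -> : b' |: C != set0 by apply/set0Pn; exists b'; rewrite setU11.
have -> : (b' |: Rr) :\: (b' |: C) = Rr :\: C.
  apply/setP => y; rewrite !inE; case: (eqVneq y b') => [->|] //=.
  by rewrite andbF.
rewrite (setU1D Rr b'C) cardsU1 b'R add1n exprS /g.
by case: (C == set0) => /=; ring.
Qed.

Lemma M_consistent (o : N -> {set N} -> R) (b b' : N) (T : {set N}) :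
  SE_objective o -> b \in T -> b' \in T -> M o b T = M o b' T.
Proof.
move=> SE bT b'T; case: (eqVneq b b') => [->//|bb'].
have b'b : b' != b by rewrite eq_sym.
rewrite (M_split o bb' b'T) (M_split o b'b bT).
have -> : T :\ b' :\ b = T :\ b :\ b'.
  by apply/setP => y; rewrite !inE; case: (y == b); case: (y == b').
apply: eq_bigr => C CR; congr (_ * _).
have bC : b \notin C by apply: (contra (subsetP CR b)); rewrite !inE eqxx andbF.
have b'C : b' \notin C by apply: (contra (subsetP CR b')); rewrite !inE eqxx.
exact: SE_step.
Qed.

End Aux.

Unset Implicit Arguments.

Theorem lemma10 (N : finType) (R : realType) (o : N -> {set N} -> R) :
  (2 <= #|N|)%N -> SE_objective o ->
  exists tau : {set N} -> R,
    (forall eta : N -> {set N} -> R, innerU o eta = innerS tau (c_eta eta)) /\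
    (forall tau' : {set N} -> R,
        (forall eta : N -> {set N} -> R, innerU o eta = innerS tau' (c_eta eta)) ->
        forall T : {set N}, in_S T -> tau' T = tau T) /\
    (forall (T : {set N}) (b : N), in_S T -> b \in T ->
        tau T = \sum_(K : {set N} | (K != set0) && (K \subset T :\ b))
                  (-1) ^+ #|(T :\ b) :\: K| * o b K).
Proof.
move=> N2 SE.
pose tau (T : {set N}) := if [pick b in T] is Some b then M o b T else 0.
have tauE : forall (T : {set N}) (b : N), b \in T -> tau T = M o b T.
  move=> T b bT; rewrite /tau; case: pickP => [b0 b0T|/(_ b)].
    exact: M_consistent.
  by rewrite bT.
have phiE : forall (a : N) (B : {set N}), in_Upsilon a B -> Phi tau a B = o a B.
  move=> a B /andP[B0 aB]; rewrite -(mobius o aB B0) /Phi.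
  by apply: eq_bigr => S /andP[/andP[_ aS] _]; apply: tauE.
exists tau; split; [|split].
- move=> eta; rewrite innerS_phi; apply: eq_bigr => a _.
  by apply: eq_bigr => B U; rewrite phiE.
- move=> tau' H T TS; apply/eqP; rewrite -subr_eq0; apply/eqP.
  apply: (@phi_zero _ _ (fun S => tau' S - tau S)) => // a B U.
  have h1 := H (@ind _ R a B).
  rewrite innerS_phi /innerU !sum_ind // in h1.
  rewrite /Phi sumrB.
  change (Phi tau' a B - Phi tau a B = 0).
  by rewrite phiE // h1 subrr.
- by move=> T b TS bT; apply: tauE.
Qed.
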